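(* Let $\lambda_1,\lambda_2,\sigma_1,\sigma_2\in\mathbb{C}^*$ and $\eta_1,\eta_2\in\mathbb{C}$. Then $\Omega(\lambda_1,\eta_1,0,\sigma_1)\otimes\Omega(\lambda_2,\eta_2,0,\sigma_2)$ is an irreducible $\mathcal{G}$-module if and only if $\lambda_1\neq\lambda_2$.
   Context: The planar Galilean conformal algebra $\mathcal{G}$ is the complex Lie algebra with basis $\{L_m,H_m,I_m,J_m\mid m\in\mathbb{Z}\}$ and brackets $[L_m,L_n]=(n-m)L_{m+n}$, $[L_m,H_n]=nH_{m+n}$, $[L_m,I_n]=(n-m)I_{m+n}$, $[L_m,J_n]=(n-m)J_{m+n}$, $[H_m,I_n]=I_{m+n}$, $[H_m,J_n]=-J_{m+n}$, and $[H_m,H_n]=[I_m,I_n]=[J_m,J_n]=[I_m,J_n]=0$ for all $m,n\in\mathbb{Z}$. For $\lambda,\sigma\in\mathbb{C}^*$, $\eta\in\mathbb{C}$, the module $\Omega(\lambda,\eta,0,\sigma)$ is $\mathbb{C}[S,T]$ with $L_m f(S,T)=\lambda^m(T+mS+m\eta)f(S,T-m)$, $H_m f(S,T)=\lambda^m S f(S,T-m)$, $I_m f(S,T)=0$, $J_m f(S,T)=\lambda^m\sigma f(S+1,T-m)$. The tensor product of $\mathcal{G}$-modules has action $x(v\otimes w)=xv\otimes w+v\otimes xw$. *)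

(* Defs.v *)
(* The field of complex numbers is R[i] for an
   arbitrary R : realType (any realType is the field of real numbers). *)
From HB Require Import structures.
From mathcomp Require Import all_boot all_algebra.
From mathcomp Require Import reals.
From mathcomp Require Import complex.
From mathcomp Require Import mpoly.

Set Implicit Arguments.
Unset Strict Implicit.
Unset Printing Implicit Defensive.

Import GRing.Theory Num.Theory.
Local Open Scope ring_scope.

(* Basis of the planar Galilean conformal algebra G:
   L_m, H_m, I_m, J_m  (m in Z). *)
Inductive gbasis : Type :=
  | GL of int | GH of int | GI of int | GJ of int.

(* A G-module structure on a C-vector space V is given by the action of the
   basis elements (extended linearly to all of G). *)

Definition is_submodule (C : fieldType) (V : lmodType C)
  (act : gbasis -> V -> V) (W : V -> Prop) : Prop :=
  [/\ W 0,
      (forall u v, W u -> W v -> W (u + v)),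
      (forall (c : C) v, W v -> W (c *: v)) &
      (forall x v, W v -> W (act x v))].

Definition irreducible_module (C : fieldType) (V : lmodType C)
  (act : gbasis -> V -> V) : Prop :=
  (exists v : V, v != 0) /\
  forall W : V -> Prop, is_submodule act W ->
    (exists v, W v /\ v != 0) -> forall v, W v.

Section Omega.
Variable R : realType.
Local Notation C := (R[i]).

Definition shift_subst (k : nat) (s t : 'I_k) (a b : C) (f : {mpoly C[k]})
  : {mpoly C[k]} :=
  f \mPo [tuple (if i == t then 'X_i + b%:MP
                 else if i == s then 'X_i + a%:MP
                 else 'X_i) | i < k].

(* The action of Omega(lam, eta, 0, sig) = C[S,T], where S = X_s, T = X_t are
   two distinct variables of C[X_0..X_{k-1}] and the remaining variables are
   treated as scalars (i.e. this is the action x (x) id on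
   C[S,T] (x) C[other variables]):
     L_m f(S,T) = lam^m (T + m S + m eta) f(S, T - m)
     H_m f(S,T) = lam^m S f(S, T - m)
     I_m f(S,T) = 0
     J_m f(S,T) = lam^m sig f(S + 1, T - m). *)
Definition omega_act_on (k : nat) (s t : 'I_k) (lam eta sig : C)
  (x : gbasis) (f : {mpoly C[k]}) : {mpoly C[k]} :=
  match x with
  | GL m => lam ^ m *: (('X_t + (m%:~R : C) *: 'X_s + (m%:~R * eta)%:MP)
                         * shift_subst s t 0 (- m%:~R) f)
  | GH m => lam ^ m *: ('X_s * shift_subst s t 0 (- m%:~R) f)
  | GI m => 0
  | GJ m => (lam ^ m * sig) *: shift_subst s t 1 (- m%:~R) f
  end.

Definition Omega_act (lam eta sig : C) : gbasis -> {mpoly C[2]} -> {mpoly C[2]} :=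
  omega_act_on (0 : 'I_2) (1 : 'I_2) lam eta sig.

(* The tensor product Omega(lam1,eta1,0,sig1) (x) Omega(lam2,eta2,0,sig2),
   realised as C[S1,T1] (x) C[S2,T2] = C[S1,T1,S2,T2] = {mpoly C[4]}
   (f(S1,T1) (x) g(S2,T2) <-> f(S1,T1) g(S2,T2)), with
   S1 = X_0, T1 = X_1, S2 = X_2, T2 = X_3 and the action
   x (v (x) w) = x v (x) w + v (x) x w. *)
Definition tensor_Omega_act (lam1 eta1 sig1 lam2 eta2 sig2 : C)
  (x : gbasis) (F : {mpoly C[4]}) : {mpoly C[4]} :=
  omega_act_on (0 : 'I_4) (1 : 'I_4) lam1 eta1 sig1 x F
  + omega_act_on (2 : 'I_4) (3 : 'I_4) lam2 eta2 sig2 x F.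

End Omega.

(* Main.v *)
Require Import Defs.
From HB Require Import structures.
From mathcomp Require Import all_boot all_algebra.
From mathcomp Require Import reals.
From mathcomp Require Import complex.
From mathcomp Require Import mpoly.
From Stdlib Require Import FunctionalExtensionality.
From mathcomp Require Import zify ring lra.
Set Implicit Arguments.
Unset Strict Implicit.
Unset Printing Implicit Defensive.
Import GRing.Theory Num.Theory.
Local Open Scope ring_scope.
Section Seqs.
Variable V : zmodType.
Definition dif (a : nat -> V) : nat -> V := fun m => a m.+1 - a m.

Lemma iter_difS d a : iter d.+1 dif a = iter d dif (dif a).
Proof. exact: iterSr. Qed.

Lemma iter_dif_add d (a b : nat -> V) :
  iter d dif (fun m => a m + b m) = fun m => iter d dif a m + iter d dif b m.
Proof.
elim: d => //= d ->; apply: functional_extensionality => m.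
by rewrite /dif opprD addrACA.
Qed.

Lemma iter_dif_shift d (a : nat -> V) :
  iter d dif (fun m => a m.+1) = fun m => iter d dif a m.+1.
Proof. by elim: d => //= d ->. Qed.

Lemma iter_dif0 d : iter d dif (fun _ => 0 : V) = fun _ => 0.
Proof. by elim: d => //= d ->; rewrite /dif subrr. Qed.

Lemma iter_dif_mono d k (a : nat -> V) :
  iter d dif a = (fun _ => 0) -> iter (k + d) dif a = (fun _ => 0).
Proof. by move=> h; rewrite iterD h iter_dif0. Qed.

Definition pseq (a : nat -> V) := exists d, iter d dif a = (fun _ => 0).

Lemma pseq_eq a b : a =1 b -> pseq a -> pseq b.
Proof. by move=> e; rewrite (functional_extensionality _ _ e). Qed.

Lemma pseq_add a b : pseq a -> pseq b -> pseq (fun m => a m + b m).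
Proof.
move=> [d hd] [e he]; exists (d + e); rewrite iter_dif_add.
have h1 : iter (d + e) dif a = (fun _ => 0) by rewrite addnC; exact: iter_dif_mono.
have h2 : iter (d + e) dif b = (fun _ => 0) by exact: iter_dif_mono.
by rewrite h1 h2; apply: functional_extensionality => m; rewrite addr0.
Qed.

Lemma pseq_shift a : pseq a -> pseq (fun m => a m.+1).
Proof. by move=> [d hd]; exists d; rewrite iter_dif_shift hd. Qed.

Lemma pseq_const x : pseq (fun _ => x).
Proof. by exists 1%N; rewrite /= /dif subrr. Qed.

Lemma pseq_sum (I : Type) (r : seq I) (P : pred I) (F : I -> nat -> V) :
  (forall i, pseq (F i)) -> pseq (fun m => \sum_(i <- r | P i) F i m).
Proof.
move=> hF; elim: r => [|i r IH].
  by apply: (pseq_eq _ (pseq_const 0)) => m; rewrite big_nil.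
case Pi: (P i).
  by apply: (pseq_eq _ (pseq_add (hF i) IH)) => m; rewrite big_cons Pi.
by apply: (pseq_eq _ IH) => m; rewrite big_cons Pi.
Qed.

End Seqs.
Arguments dif {V}.
Arguments pseq {V}.

Lemma iter_dif_lin (V V' : zmodType) (f : V -> V')
  (fB : forall x y, f (x - y) = f x - f y) d (a : nat -> V) :
  iter d dif (fun m => f (a m)) = fun m => f (iter d dif a m).
Proof. by elim: d => //= d ->; apply: functional_extensionality => m; rewrite /dif fB. Qed.

Lemma pseq_lin (V V' : zmodType) (f : V -> V')
  (fB : forall x y, f (x - y) = f x - f y) (a : nat -> V) :
  pseq a -> pseq (fun m => f (a m)).
Proof.
move=> [d hd]; exists d; rewrite iter_dif_lin // hd.
apply: functional_extensionality => m.
by have := fB 0 0; rewrite !subrr.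
Qed.

Section SeqRing.
Variable V : comNzRingType.

Lemma iter_dif_mul_aux n : forall d e (a b : nat -> V), (d + e <= n)%N ->
  iter d dif a = (fun _ => 0) -> iter e dif b = (fun _ => 0) ->
  iter (d + e) dif (fun m => a m * b m) = (fun _ => 0).
Proof.
elim: n => [|n IH] d e a b hn ha hb.
  by move: hn; rewrite leqn0 addn_eq0 => /andP[/eqP d0 /eqP e0]; subst d e;
    move: ha => /= ->; apply: functional_extensionality => m; rewrite mul0r.
case: d ha hn => [|d] ha hn.
  have h0 : (fun m => a m * b m) = (fun _ => 0).
    by apply: functional_extensionality => m; rewrite /= in ha; rewrite ha mul0r.
  by rewrite h0 iter_dif0.
case: e hb hn => [|e] hb hn.
  have h0 : (fun m => a m * b m) = (fun _ => 0).
    by apply: functional_extensionality => m; rewrite /= in hb; rewrite hb mulr0.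
  by rewrite h0 iter_dif0.
rewrite addSn iter_difS.
have -> : dif (fun m => a m * b m) =
     fun m => dif a m * b m.+1 + a m * dif b m.
  apply: functional_extensionality => m; rewrite /dif.
  by rewrite mulrBl mulrBr addrA subrK.
rewrite iter_dif_add.
rewrite addSn addnS /= in hn.
have h1 : iter (d + e.+1) dif (fun m => dif a m * b m.+1) = (fun _ => 0).
  apply: IH; first by lia.
    by rewrite -iter_difS.
  by rewrite iter_dif_shift hb.
have h2 : iter (d.+1 + e) dif (fun m => a m * dif b m) = (fun _ => 0).
  apply: IH => //; try lia.
  by rewrite -iter_difS.
rewrite h1 addnS -addSn h2.
by apply: functional_extensionality => m; rewrite addr0.
Qed.

Lemma pseq_mul (a b : nat -> V) : pseq a -> pseq b -> pseq (fun m => a m * b m).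
Proof. by move=> [d hd] [e he]; exists (d + e); apply: (@iter_dif_mul_aux (d + e)). Qed.

Lemma pseq_prod (I : Type) (r : seq I) (P : pred I) (F : I -> nat -> V) :
  (forall i, pseq (F i)) -> pseq (fun m => \prod_(i <- r | P i) F i m).
Proof.
move=> hF; elim: r => [|i r IH].
  by apply: (pseq_eq _ (pseq_const 1)) => m; rewrite big_nil.
case Pi: (P i).
  by apply: (pseq_eq _ (pseq_mul (hF i) IH)) => m; rewrite big_cons Pi.
by apply: (pseq_eq _ IH) => m; rewrite big_cons Pi.
Qed.

Lemma pseq_exp (a : nat -> V) k : pseq a -> pseq (fun m => a m ^+ k).
Proof.
move=> ha; elim: k => [|k IH].
  by apply: (pseq_eq _ (pseq_const 1)) => m; rewrite expr0.
by apply: (pseq_eq _ (pseq_mul ha IH)) => m; rewrite exprS.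
Qed.

Lemma pseq_nat : pseq (fun m => m%:R : V).
Proof.
exists 2%N; rewrite /= /dif.
by apply: functional_extensionality => m; rewrite !mulrS; ring.
Qed.

End SeqRing.
Section Sep.
Variables (K : fieldType) (V : lmodType K) (W : V -> Prop).
Hypotheses (W0 : W 0) (WD : forall u v, W u -> W v -> W (u + v))
  (WZ : forall c v, W v -> W (c *: v)).
Variables (l1 l2 : K).
Hypotheses (hl1 : l1 != 0) (hl2 : l2 != 0) (hl12 : l1 != l2).

Lemma WB u v : W u -> W v -> W (u - v).
Proof. by move=> hu hv; rewrite -scaleN1r; apply: WD => //; apply: WZ. Qed.

Lemma sepA d : forall a : nat -> V, iter d dif a = (fun _ => 0) ->
  (forall m, W (l1 *: a m.+1 - l2 *: a m)) -> forall m, W (a m).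
Proof.
elim: d => [|d IH] a ha h m.
  by have := congr1 (fun f => f m) ha => /= ->.
rewrite iter_difS in ha.
have hd : forall m, W (dif a m).
  apply: (IH _ ha) => k.
  have -> : l1 *: dif a k.+1 - l2 *: dif a k =
     (l1 *: a k.+2 - l2 *: a k.+1) - (l1 *: a k.+1 - l2 *: a k).
    rewrite /dif !scalerBr !opprB addrACA [RHS]addrACA.
    by congr (_ + _); rewrite addrC.
  by apply: WB; apply: h.
have -> : a m = (l1 - l2)^-1 *: ((l1 *: a m.+1 - l2 *: a m) - l1 *: dif a m).
  have -> : (l1 *: a m.+1 - l2 *: a m) - l1 *: dif a m = (l1 - l2) *: a m.
    by rewrite /dif scalerBr opprB addrC addrA subrK scalerBl.
  by rewrite scalerA mulVf ?scale1r // subr_eq0.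
by apply: WZ; apply: WB => //; apply: WZ.
Qed.

Lemma sepB e : forall a b : nat -> V, pseq a -> iter e dif b = (fun _ => 0) ->
  (forall m, W (l1 ^+ m *: a m + l2 ^+ m *: b m)) -> forall m, W (a m).
Proof.
elim: e => [|e IH] a b pa hb h m.
  have := h m; have := congr1 (fun f => f m) hb => /= ->.
  rewrite scaler0 addr0 => hm.
  have -> : a m = (l1 ^+ m)^-1 *: (l1 ^+ m *: a m).
    by rewrite scalerA mulVf ?scale1r // expf_neq0.
  exact: WZ.
have [d hd] := pa.
apply: (sepA hd) => k.
pose a' := fun k => l1 *: a k.+1 - l2 *: a k.
pose b' := fun k => l2 *: dif b k.
apply: (IH a' b') => [||j].
- apply: pseq_add; first by apply: (pseq_lin (f := fun x => l1 *: x)) => [x y|]; [rewrite scalerBr | apply: pseq_shift].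
  by apply: (pseq_lin (f := fun x => - (l2 *: x))) => // x y; rewrite scalerBr opprB opprK addrC.
- rewrite /b' (iter_dif_lin (f := fun x => l2 *: x)); last by move=> x y; rewrite scalerBr.
  rewrite -iter_difS hb; apply: functional_extensionality => x; exact: scaler0.
- have -> : l1 ^+ j *: a' j + l2 ^+ j *: b' j =
      (l1 ^+ j.+1 *: a j.+1 + l2 ^+ j.+1 *: b j.+1) - l2 *: (l1 ^+ j *: a j + l2 ^+ j *: b j).
    rewrite /a' /b' /dif !scalerBr !scalerDr !scalerA !exprS.
    rewrite [l1 ^+ j * l1]mulrC [l1 ^+ j * l2]mulrC [l2 ^+ j * l2]mulrC.
    by rewrite opprD addrACA.
  by apply: WB => //; apply: WZ.
Qed.

End Sep.

Lemma sepAB (K : fieldType) (V : lmodType K) (W : V -> Prop)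
  (W0 : W 0) (WD : forall u v, W u -> W v -> W (u + v))
  (WZ : forall c v, W v -> W (c *: v)) (l1 l2 : K)
  (hl1 : l1 != 0) (hl2 : l2 != 0) (hl12 : l1 != l2) (a b : nat -> V) :
  pseq a -> pseq b -> (forall m, W (l1 ^+ m *: a m + l2 ^+ m *: b m)) ->
  (forall m, W (a m)) /\ (forall m, W (b m)).
Proof.
move=> pa pb h; split.
  by have [e he] := pb; apply: (sepB W0 WD WZ hl1 hl12 pa he h).
have [e he] := pa.
have h' : forall m, W (l2 ^+ m *: b m + l1 ^+ m *: a m) by move=> m; rewrite addrC.
have hl21 : l2 != l1 by rewrite eq_sym.
exact: (sepB W0 WD WZ hl2 hl21 pb he h').
Qed.
Section MP.
Variable K : numFieldType.

Lemma comp_comp n k l (F : {mpoly K[n]}) (l1 : n.-tuple {mpoly K[k]})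
  (l2 : k.-tuple {mpoly K[l]}) :
  (F \mPo l1) \mPo l2 = F \mPo [tuple (tnth l1 i) \mPo l2 | i < n].
Proof.
rewrite [F \mPo l1]comp_mpolyE [RHS]comp_mpolyE raddf_sum.
apply: eq_bigr => m _; rewrite /= comp_mpolyZ rmorph_prod; congr (_ *: _).
by apply: eq_bigr => i _; rewrite rmorphXn tnth_mktuple.
Qed.

Definition sh n (c : 'I_n -> K) (F : {mpoly K[n]}) : {mpoly K[n]} :=
  F \mPo [tuple 'X_i + (c i)%:MP | i < n].

Lemma sh_comp n (c c' : 'I_n -> K) F :
  sh c (sh c' F) = sh (fun i => c' i + c i) F.
Proof.
rewrite /sh comp_comp; congr (_ \mPo _); apply: eq_from_tnth => i.
rewrite !tnth_mktuple rmorphD /= comp_mpolyC comp_mpolyXU -tnth_nth tnth_mktuple.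
by rewrite mpolyCD -addrA [((c i)%:MP + _)]addrC.
Qed.

Lemma sh0 n (F : {mpoly K[n]}) : sh (fun _ => 0) F = F.
Proof.
rewrite /sh -[RHS]comp_mpoly_id; congr (_ \mPo _); apply: eq_from_tnth => i.
by rewrite !tnth_mktuple mpolyC0 addr0.
Qed.

Lemma sh_meval n (c : 'I_n -> K) F v :
  (sh c F).@[v] = F.@[fun i => v i + c i].
Proof.
rewrite /sh comp_mpoly_meval; apply: meval_eq => i.
by rewrite tnth_mktuple mevalD mevalXU mevalC.
Qed.

Lemma sh_add n (c : 'I_n -> K) F G : sh c (F + G) = sh c F + sh c G.
Proof. exact: comp_mpolyD. Qed.
Lemma sh_sub n (c : 'I_n -> K) F G : sh c (F - G) = sh c F - sh c G.
Proof. exact: comp_mpolyB. Qed.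
Lemma sh_scale n (c : 'I_n -> K) a F : sh c (a *: F) = a *: sh c F.
Proof. exact: comp_mpolyZ. Qed.

Lemma pseq_comp n k (lq : nat -> n.-tuple {mpoly K[k]}) :
  (forall i, pseq (fun m => tnth (lq m) i)) ->
  forall F : {mpoly K[n]}, pseq (fun m => F \mPo lq m).
Proof.
move=> hq F.
apply: (pseq_eq (a := fun m => \sum_(mm <- msupp F)
                   F@_mm *: \prod_(i < n) (tnth (lq m) i) ^+ (mm i))).
  by move=> m; rewrite comp_mpolyE.
apply: pseq_sum => mm.
apply: (pseq_lin (f := fun x => F@_mm *: x)); first by move=> x y; rewrite scalerBr.
by apply: pseq_prod => i; apply: pseq_exp.
Qed.

Lemma pseq_sh n (u w : 'I_n -> K) (F : {mpoly K[n]}) :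
  pseq (fun m => sh (fun i => u i * m%:R + w i) F).
Proof.
apply: pseq_comp => i.
apply: (pseq_eq (a := fun m => ('X_i + (w i)%:MP) + (u i)%:MP * (m%:R))).
  move=> m; rewrite tnth_mktuple mpolyCD mpolyCM.
  by rewrite -mpolyC_nat addrAC addrA.
apply: pseq_add; first exact: pseq_const.
apply: (pseq_lin (f := fun x => (u i)%:MP * x)); first by move=> x y; rewrite mulrBr.
exact: pseq_nat.
Qed.

End MP.
Section LemZ.
Variable K : numFieldType.

Lemma unlift_widen n (j : 'I_n) : unlift ord_max (widen_ord (leqnSn n) j) = Some j.
Proof.
have -> : widen_ord (leqnSn n) j = lift ord_max j by apply: ord_inj; rewrite lift_max.
exact: liftK.
Qed.

Lemma mnm_split n (m mm : 'X_{1..n.+1}) :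
  ([multinom mm (widen_ord (leqnSn n) i) | i < n] ==
   [multinom m (widen_ord (leqnSn n) i) | i < n]) && (mm ord_max == m ord_max)
  = (mm == m).
Proof.
apply/idP/eqP => [/andP[/eqP h1 /eqP h2]|->]; last by rewrite !eqxx.
apply/mnmP => i; case: (unliftP ord_max i) => [j ->|->] //.
have := congr1 (fun mm : 'X_{1..n} => mm j) h1; rewrite !mnmE.
have -> // : lift ord_max j = widen_ord (leqnSn n) j.
by apply: ord_inj; rewrite lift_max.
Qed.

Lemma muni_coef n (F : {mpoly K[n.+1]}) (m : 'X_{1..n.+1}) :
  ((muni F)`_(m ord_max))@_[multinom m (widen_ord (leqnSn n) i) | i < n] = F@_m.
Proof.
rewrite {2}[F]mpolyE muniE coef_sum !raddf_sum /=.
apply: eq_bigr => mm _.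
rewrite coefZ coefXn mcoeffZ mcoeffX mulr_natr mcoeffMn mcoeffZ mcoeffX.
rewrite -mnm_split [(m ord_max == _)]eq_sym.
by case: (_ == _); case: (_ == _); rewrite /= ?mulr0n ?mulr1n ?mulr0.
Qed.

Definition ext n (v : 'I_n -> K) (x : K) (i : 'I_n.+1) : K :=
  odflt x (omap v (unlift ord_max i)).

Lemma muni_eval n (F : {mpoly K[n.+1]}) (v : 'I_n -> K) x :
  (map_poly (meval v) (muni F)).[x] = F.@[ext v x].
Proof.
rewrite muniE mevalE rmorph_sum horner_sum; apply: eq_bigr => mm _.
rewrite /= map_polyZ map_polyXn hornerZ hornerXn /= mevalZ mevalX.
rewrite big_ord_recr /= /ext unlift_none /= -mulrA; congr (_ * (_ * _)).
by apply: eq_bigr => i _; rewrite unlift_widen /= mnmE.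
Qed.

Lemma lemZ n : forall (F : {mpoly K[n]}),
  (forall v : 'I_n -> nat, F.@[fun i => (v i)%:R] = 0) -> F = 0.
Proof.
elim: n => [|n IH] F hF.
  have h0 := hF (fun _ => 0%N); rewrite [F]nvar0_mpolyC mevalC in h0.
  by rewrite [F]nvar0_mpolyC h0 mpolyC0.
suff hk : forall k, (muni F)`_k = 0.
  by apply/mpolyP => m; rewrite mcoeff0 -muni_coef hk mcoeff0.
move=> k; apply: IH => v.
set p := map_poly (meval (fun i => (v i)%:R)) (muni F).
have -> : ((muni F)`_k).@[fun i => (v i)%:R] = p`_k by rewrite coef_map.
suff -> : p = 0 by rewrite coef0.
apply: (@roots_geq_poly_eq0 _ _ [seq (i%:R : K) | i <- iota 0 (size p)]).
- apply/allP => y /mapP[i _ ->]; rewrite /root muni_eval.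
  have := hF (fun j => odflt i (omap v (unlift ord_max j))).
  move=> <-; apply/eqP; apply: meval_eq => j.
  by rewrite /ext; case: (unlift ord_max j).
- rewrite map_inj_uniq ?iota_uniq // => a b /eqP; rewrite eqr_nat => /eqP.
  done.
- by rewrite size_map size_iota.
Qed.

End LemZ.
Lemma chain (V : zmodType) (W Q : V -> Prop) (N : V -> V) (x : V) :
  W x -> Q x -> x != 0 -> (forall y, W y -> W (N y)) -> (forall y, Q y -> Q (N y)) ->
  (exists d, iter d N x = 0) -> exists y, [/\ W y, Q y, y != 0 & N y = 0].
Proof.
move=> Wx Qx x0 WN QN [d]; elim: d x Wx Qx x0 => [|d IH] x Wx Qx x0.
  by move=> /= h; rewrite h eqxx in x0.
rewrite iterSr => h.
have [Nx0|Nx0] := eqVneq (N x) 0; first by exists x.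
by apply: (IH (N x)) => //; [apply: WN | apply: QN].
Qed.

Lemma iter_add (V : zmodType) (N : V -> V) (NB : forall x y, N (x - y) = N x - N y) k :
  forall x y, iter k N (x - y) = iter k N x - iter k N y.
Proof. by elim: k => //= k IH x y; rewrite IH NB. Qed.

Lemma iter_dif_orbit (V : zmodType) (f : V -> V) (fB : forall x y, f (x - y) = f x - f y)
  (a : nat -> V) (ha : forall m, a m.+1 = f (a m)) k m :
  iter k dif a m = iter k (fun x => f x - x) (a m).
Proof.
elim: k m => //= k IH m.
rewrite /dif !IH ha -iter_add; last first.
  by move=> x y; rewrite fB !opprB addrACA [in RHS]addrACA [- x - f y]addrC.
by rewrite -[f (a m) - a m]/((fun x => f x - x) (a m)) -iterSr.
Qed.

Lemma ord4 (j : 'I_4) : [\/ j = 0, j = 1, j = 2 | j = 3].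
Proof.
case: j => [[|[|[|[|k]]]] Hk]; [apply: Or41|apply: Or42|apply: Or43|apply: Or44|by []];
  exact: val_inj.
Qed.

Section Main.
Variable R : realType.
Local Notation C := (R[i]).

Lemma sh_zero n (c : 'I_n -> C) F : (forall i, c i = 0) -> sh c F = F.
Proof.
move=> h.
have -> : c = (fun _ => 0) by apply: functional_extensionality => i; rewrite h.
exact: sh0.
Qed.

Definition Nop (c : 'I_4 -> C) (G : {mpoly C[4]}) := sh c G - G.

Lemma Nop_nil (c : 'I_4 -> C) F : exists d, iter d (Nop c) F = 0.
Proof.
pose a := fun m : nat => sh (fun i => c i * m%:R + 0) F.
have [d hd] : pseq a by exact: pseq_sh.
exists d.
have e0 : a 0%N = F by apply: sh_zero => i; rewrite mulr0 addr0.
have ha : forall m, a m.+1 = sh c (a m).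
  move=> m; rewrite /a sh_comp.
  have -> : (fun i => c i * m.+1%:R + 0) = (fun i => c i * m%:R + 0 + c i).
    by apply: functional_extensionality => i; rewrite !addr0 mulrS mulrDr mulr1 addrC.
  by [].
have := iter_dif_orbit (@sh_sub _ _ c) ha d 0.
by rewrite hd e0 /=.
Qed.

Lemma zmod4 (V : zmodType) (A B B' G : V) : (A - B) - (B' - G) = (A - B') - (B - G).
Proof. by rewrite !opprB addrACA [RHS]addrACA [- B + _]addrC. Qed.

Lemma sh_comm (c c' : 'I_4 -> C) G : sh c (sh c' G) = sh c' (sh c G).
Proof.
rewrite !sh_comp.
have -> : (fun i => c' i + c i) = (fun i => c i + c' i).
  by apply: functional_extensionality => i; exact: addrC.
by [].
Qed.

Lemma Nop_comm c c' G : Nop c (Nop c' G) = Nop c' (Nop c G).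
Proof. rewrite /Nop !sh_sub sh_comm. set A := sh c' (sh c G). set B := sh c G. set B' := sh c' G. exact: zmod4. Qed.

Lemma Nop0 c : Nop c 0 = 0.
Proof. by rewrite /Nop /sh comp_mpoly0 subrr. Qed.

Lemma shift_sh (s t : 'I_4) (a b : C) (F : {mpoly C[4]}) :
  shift_subst s t a b F = sh (fun i => if i == t then b else if i == s then a else 0) F.
Proof.
rewrite /shift_subst /sh.
have -> : [tuple (if i == t then 'X_i + b%:MP
                 else if i == s then 'X_i + a%:MP
                 else 'X_i) | i < 4] =
          [tuple 'X_i + (if i == t then b else if i == s then a else 0)%:MP | i < 4].
  apply: eq_from_tnth => i; rewrite !tnth_mktuple.
  by case: (i == t); case: (i == s); rewrite ?mpolyC0 ?addr0.
by [].
Qed.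

Lemma pseq_ss (s t : 'I_4) (a : C) (F : {mpoly C[4]}) : pseq (fun m => shift_subst s t a (- m%:R) F).
Proof.
apply: (pseq_eq _ (pseq_sh (fun i => if i == t then -1 else 0)
           (fun i => if i == t then 0 else if i == s then a else 0) F)) => m.
rewrite shift_sh.
have -> : (fun i => (if i == t then -1 else 0) * m%:R +
                   (if i == t then 0 else if i == s then a else 0)) =
          (fun i => if i == t then - m%:R else if i == s then a else 0).
  apply: functional_extensionality => i.
  by case: (i == t); rewrite ?mulN1r ?addr0 ?mul0r ?add0r.
by [].
Qed.

Lemma ss0 (s t : 'I_4) (F : {mpoly C[4]}) : shift_subst s t 0 (- 0%:R) F = F.
Proof.
rewrite shift_sh sh_zero // => i.
by case: (i == t); case: (i == s); rewrite ?oppr0.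
Qed.

Lemma actJ lam1 lam2 sig1 sig2 eta1 eta2 (m : nat) (F : {mpoly C[4]}) :
  tensor_Omega_act lam1 eta1 sig1 lam2 eta2 sig2 (GJ m) F =
  lam1 ^+ m *: (sig1 *: shift_subst (0 : 'I_4) 1 1 (- m%:R) F)
  + lam2 ^+ m *: (sig2 *: shift_subst (2 : 'I_4) 3 1 (- m%:R) F).
Proof. by rewrite /tensor_Omega_act /= !scalerA. Qed.

Lemma actH lam1 lam2 sig1 sig2 eta1 eta2 (m : nat) (F : {mpoly C[4]}) :
  tensor_Omega_act lam1 eta1 sig1 lam2 eta2 sig2 (GH m) F =
  lam1 ^+ m *: ('X_(0 : 'I_4) * shift_subst (0 : 'I_4) 1 0 (- m%:R) F)
  + lam2 ^+ m *: ('X_(2 : 'I_4) * shift_subst (2 : 'I_4) 3 0 (- m%:R) F).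
Proof. by []. Qed.

Lemma actL lam1 lam2 sig1 sig2 eta1 eta2 (m : nat) (F : {mpoly C[4]}) :
  tensor_Omega_act lam1 eta1 sig1 lam2 eta2 sig2 (GL m) F =
  lam1 ^+ m *: (('X_(1 : 'I_4) + m%:R *: 'X_(0 : 'I_4) + (m%:R * eta1)%:MP)
                 * shift_subst (0 : 'I_4) 1 0 (- m%:R) F)
  + lam2 ^+ m *: (('X_(3 : 'I_4) + m%:R *: 'X_(2 : 'I_4) + (m%:R * eta2)%:MP)
                 * shift_subst (2 : 'I_4) 3 0 (- m%:R) F).
Proof. by []. Qed.

Section Irr.
Variables (lam1 lam2 sig1 sig2 eta1 eta2 : C).
Hypotheses (hl1 : lam1 != 0) (hl2 : lam2 != 0) (hs1 : sig1 != 0) (hs2 : sig2 != 0)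
  (hl12 : lam1 != lam2).
Variable W : {mpoly C[4]} -> Prop.
Hypothesis hW : is_submodule (tensor_Omega_act lam1 eta1 sig1 lam2 eta2 sig2) W.

Let W0 : W 0. Proof. by case: hW. Qed.
Let WD u v : W u -> W v -> W (u + v). Proof. by case: hW => _ h _ _; apply: h. Qed.
Let WZ c v : W v -> W (c *: v). Proof. by case: hW => _ _ h _; apply: h. Qed.
Let Wact x v : W v -> W (tensor_Omega_act lam1 eta1 sig1 lam2 eta2 sig2 x v).
Proof. by case: hW => _ _ _ h; apply: h. Qed.
Let WB u v : W u -> W v -> W (u - v).
Proof. by move=> hu hv; rewrite -scaleN1r; apply: WD => //; apply: WZ. Qed.

Lemma WJ F : W F -> (forall m, W (shift_subst (0 : 'I_4) 1 1 (- m%:R) F)) /\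
                     (forall m, W (shift_subst (2 : 'I_4) 3 1 (- m%:R) F)).
Proof.
move=> WF.
have [] := sepAB W0 WD WZ hl1 hl2 hl12
  (a := fun m => sig1 *: shift_subst (0 : 'I_4) 1 1 (- m%:R) F)
  (b := fun m => sig2 *: shift_subst (2 : 'I_4) 3 1 (- m%:R) F).
- by apply: (pseq_lin (f := fun x => sig1 *: x)) => [x y|]; [rewrite scalerBr | apply: pseq_ss].
- by apply: (pseq_lin (f := fun x => sig2 *: x)) => [x y|]; [rewrite scalerBr | apply: pseq_ss].
- by move=> m; rewrite -(actJ lam1 lam2 sig1 sig2 eta1 eta2); apply: Wact.
move=> h1 h2; split => m.
  by have := WZ (sig1^-1) (h1 m); rewrite scalerA mulVf // scale1r.
by have := WZ (sig2^-1) (h2 m); rewrite scalerA mulVf // scale1r.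
Qed.

Lemma WH F : W F -> W ('X_(0 : 'I_4) * F) /\ W ('X_(2 : 'I_4) * F).
Proof.
move=> WF.
have [] := sepAB W0 WD WZ hl1 hl2 hl12
  (a := fun m => 'X_(0 : 'I_4) * shift_subst (0 : 'I_4) 1 0 (- m%:R) F)
  (b := fun m => 'X_(2 : 'I_4) * shift_subst (2 : 'I_4) 3 0 (- m%:R) F).
- by apply: (pseq_lin (f := fun x => 'X_(0 : 'I_4) * x)) => [x y|]; [rewrite mulrBr | apply: pseq_ss].
- by apply: (pseq_lin (f := fun x => 'X_(2 : 'I_4) * x)) => [x y|]; [rewrite mulrBr | apply: pseq_ss].
- by move=> m; rewrite -(actH lam1 lam2 sig1 sig2 eta1 eta2); apply: Wact.
by move=> h1 h2; split; [have := h1 0%N | have := h2 0%N]; rewrite ss0.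
Qed.

Lemma WL F : W F -> W ('X_(1 : 'I_4) * F) /\ W ('X_(3 : 'I_4) * F).
Proof.
move=> WF.
have pe : forall (j k : 'I_4) (eta : C),
    pseq (fun m : nat => 'X_j + m%:R *: 'X_k + (m%:R * eta)%:MP).
  move=> j k eta; apply: pseq_add; first apply: pseq_add.
  - exact: pseq_const.
  - apply: (pseq_lin (f := fun x : C => x *: 'X_k)); first by move=> x y; rewrite scalerBl.
    exact: pseq_nat.
  - apply: (pseq_lin (f := fun x : C => (x * eta)%:MP)); first by move=> x y; rewrite mulrBl mpolyCB.
    exact: pseq_nat.
have [] := sepAB W0 WD WZ hl1 hl2 hl12
  (a := fun m => ('X_(1 : 'I_4) + m%:R *: 'X_(0 : 'I_4) + (m%:R * eta1)%:MP)
                 * shift_subst (0 : 'I_4) 1 0 (- m%:R) F)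
  (b := fun m => ('X_(3 : 'I_4) + m%:R *: 'X_(2 : 'I_4) + (m%:R * eta2)%:MP)
                 * shift_subst (2 : 'I_4) 3 0 (- m%:R) F).
- by apply: pseq_mul; [apply: pe | apply: pseq_ss].
- by apply: pseq_mul; [apply: pe | apply: pseq_ss].
- by move=> m; rewrite -(actL lam1 lam2 sig1 sig2 eta1 eta2); apply: Wact.
move=> h1 h2; split; [have := h1 0%N | have := h2 0%N];
  by rewrite ss0 scale0r mul0r mpolyC0 !addr0.
Qed.

Lemma WX (j : 'I_4) F : W F -> W ('X_j * F).
Proof.
move=> WF; case: (ord4 j) => ->.
- by case: (WH WF).
- by case: (WL WF).
- by case: (WH WF).
- by case: (WL WF).
Qed.

Lemma Wmul F : W F -> forall p, W (p * F).
Proof.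
move=> WF p; elim/mpolyind: p => [|c m p _ _ IH].
  by rewrite mul0r.
rewrite mulrDl -scalerAl; apply: WD => //; apply: WZ.
rewrite mpolyXE_id.
elim: (index_enum _) => [|i r IHr]; first by rewrite big_nil mul1r.
rewrite big_cons -mulrA.
elim: (m i) => [|k IHk]; first by rewrite expr0 mul1r.
by rewrite exprS -mulrA; apply: WX.
Qed.

Definition cP1 : 'I_4 -> C := fun i => if i == 1 then - 0%:R else if i == 0 then 1 else 0.
Definition cQ1 : 'I_4 -> C := fun i => if i == 1 then - 1%:R else if i == 0 then 1 else 0.
Definition cP2 : 'I_4 -> C := fun i => if i == 3 then - 0%:R else if i == 2 then 1 else 0.
Definition cQ2 : 'I_4 -> C := fun i => if i == 3 then - 1%:R else if i == 2 then 1 else 0.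

Lemma W_Nop c F : (c = cP1 \/ c = cQ1 \/ c = cP2 \/ c = cQ2) -> W F -> W (Nop c F).
Proof.
move=> hc WF; rewrite /Nop; apply: WB => //.
have [h1 h2] := WJ WF.
case: hc => [->|[->|[->|->]]].
- by have := h1 0%N; rewrite shift_sh.
- by have := h1 1%N; rewrite shift_sh.
- by have := h2 0%N; rewrite shift_sh.
- by have := h2 1%N; rewrite shift_sh.
Qed.

Lemma Wone : (exists v, W v /\ v != 0) -> W 1.
Proof.
move=> [F [WF F0]].
have hP1 : forall y, W y -> W (Nop cP1 y) := fun y => @W_Nop cP1 y (or_introl erefl).
have hQ1 : forall y, W y -> W (Nop cQ1 y) := fun y => @W_Nop cQ1 y (or_intror (or_introl erefl)).
have hP2 : forall y, W y -> W (Nop cP2 y) :=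
  fun y => @W_Nop cP2 y (or_intror (or_intror (or_introl erefl))).
have hQ2 : forall y, W y -> W (Nop cQ2 y) :=
  fun y => @W_Nop cQ2 y (or_intror (or_intror (or_intror erefl))).
have [G1 [WG1 _ G10 N1]] := chain (W := W) (Q := fun _ => True) (N := Nop cP1) WF I F0
   hP1 (fun _ _ => I) (Nop_nil _ _).
have [G2 [WG2 Q2 G20 N2]] := chain (W := W) (Q := fun y => Nop cP1 y = 0) (N := Nop cQ1) WG1 N1 G10
   hQ1
   (fun y hy => etrans (Nop_comm _ _ _) (etrans (f_equal _ hy) (Nop0 _))) (Nop_nil _ _).
have [G3 [WG3 [Q31 Q32] G30 N3]] :=
   chain (W := W) (Q := fun y => Nop cP1 y = 0 /\ Nop cQ1 y = 0) (N := Nop cP2) WG2 (conj Q2 N2) G20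
   hP2
   (fun y '(conj h1 h2) => conj (etrans (Nop_comm _ _ _) (etrans (f_equal _ h1) (Nop0 _)))
                              (etrans (Nop_comm _ _ _) (etrans (f_equal _ h2) (Nop0 _))))
   (Nop_nil _ _).
have [G [WG [[QP1 QQ1] QP2] G0 QQ2]] :=
   chain (W := W) (Q := fun y => (Nop cP1 y = 0 /\ Nop cQ1 y = 0) /\ Nop cP2 y = 0) (N := Nop cQ2)
   WG3 (conj (conj Q31 Q32) N3) G30
   hQ2
   (fun y '(conj (conj h1 h2) h3) =>
      conj (conj (etrans (Nop_comm _ _ _) (etrans (f_equal _ h1) (Nop0 _)))
                 (etrans (Nop_comm _ _ _) (etrans (f_equal _ h2) (Nop0 _))))
           (etrans (Nop_comm _ _ _) (etrans (f_equal _ h3) (Nop0 _))))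
   (Nop_nil _ _).
have inv : forall c, Nop c G = 0 -> forall v, G.@[fun i => v i + c i] = G.@[v].
  move=> c h v; rewrite -sh_meval; move: h; rewrite /Nop => /eqP; rewrite subr_eq0 => /eqP ->.
  by [].
have ej : forall j : 'I_4, forall v, G.@[fun i => v i + (i == j)%:R] = G.@[v].
  move=> j v; case: (ord4 j) => ->.
  - have -> : (fun i => v i + (i == 0)%:R) = (fun i => v i + cP1 i).
      by apply: functional_extensionality => i; case: (ord4 i) => ->; rewrite /cP1 /= ?oppr0.
    exact: inv.
  - transitivity (G.@[fun i => (v i + (i == 1)%:R) + cQ1 i]); first by rewrite (inv _ QQ1).
    have -> : (fun i => (v i + (i == 1)%:R) + cQ1 i) = (fun i => v i + cP1 i).
      by apply: functional_extensionality => i; case: (ord4 i) => ->; rewrite /cQ1 /cP1 /=; ring.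
    exact: inv.
  - have -> : (fun i => v i + (i == 2)%:R) = (fun i => v i + cP2 i).
      by apply: functional_extensionality => i; case: (ord4 i) => ->; rewrite /cP2 /= ?oppr0.
    exact: inv.
  - transitivity (G.@[fun i => (v i + (i == 3)%:R) + cQ2 i]); first by rewrite (inv _ QQ2).
    have -> : (fun i => (v i + (i == 3)%:R) + cQ2 i) = (fun i => v i + cP2 i).
      by apply: functional_extensionality => i; case: (ord4 i) => ->; rewrite /cQ2 /cP2 /=; ring.
    exact: inv.
have ek : forall j k v, G.@[fun i => v i + (i == j)%:R * k%:R] = G.@[v].
  move=> j; elim => [|k IH] v.
    have -> : (fun i => v i + (i == j)%:R * 0%:R) = v.
      by apply: functional_extensionality => i; rewrite mulr0 addr0.
    by [].
  have -> : (fun i => v i + (i == j)%:R * k.+1%:R) =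
            (fun i => (v i + (i == j)%:R * k%:R) + (i == j)%:R).
    by apply: functional_extensionality => i; rewrite mulrS mulrDr mulr1 addrAC addrA.
  by rewrite ej IH.
have eN : forall n : 'I_4 -> nat, G.@[fun i => (n i)%:R] = G.@[fun _ => 0].
  move=> n.
  have gen : forall r : seq 'I_4, uniq r ->
      G.@[fun i => if i \in r then (n i)%:R else 0] = G.@[fun _ => 0].
    elim => [|j r IH] /=.
      move=> _.
      have -> : (fun i : 'I_4 => if i \in [::] then (n i)%:R else 0) = (fun _ => 0 : C).
        by apply: functional_extensionality.
      by [].
    move=> /andP[jr ur].
    have -> : (fun i : 'I_4 => if i \in j :: r then (n i)%:R else 0 : C) =
              (fun i => (if i \in r then (n i)%:R else 0) + (i == j)%:R * (n j)%:R).
      apply: functional_extensionality => i; rewrite in_cons.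
      case: (eqVneq i j) => [->|ij] /=; first by rewrite (negbTE jr) add0r mul1r.
      by rewrite mul0r addr0.
    by rewrite ek IH.
  have := gen (enum 'I_4) (enum_uniq _).
  have -> : (fun i => if i \in enum 'I_4 then (n i)%:R else 0) = (fun i => (n i)%:R : C).
    by apply: functional_extensionality => i; rewrite mem_enum.
  by [].
have Gc : G = (G.@[fun _ => 0])%:MP.
  apply/eqP; rewrite -subr_eq0; apply/eqP; apply: lemZ => n.
  by rewrite mevalB mevalC eN subrr.
set c := G.@[fun _ => 0] in Gc.
have c0 : c != 0 by apply: contraNneq G0 => h; rewrite Gc h mpolyC0.
have -> : (1 : {mpoly C[4]}) = c^-1 *: G.
  by rewrite Gc -mul_mpolyC -mpolyCM mulVf // mpolyC1.
exact: WZ.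
Qed.

End Irr.
Lemma eval_ss (s t : 'I_4) (a b : C) (F : {mpoly C[4]}) v :
  (shift_subst s t a b F).@[v] =
  F.@[fun i => v i + (if i == t then b else if i == s then a else 0)].
Proof. by rewrite shift_sh sh_meval. Qed.

Definition Wsum (F : {mpoly C[4]}) : Prop :=
  forall v w : 'I_4 -> C, v 0 + v 2 = w 0 + w 2 -> v 1 + v 3 = w 1 + w 3 -> F.@[v] = F.@[w].

Lemma Wsum_E (F : {mpoly C[4]}) (v : 'I_4 -> C) (c0 : 'I_4 -> C) : Wsum F ->
  forall u, u 0 + u 2 = v 0 + v 2 -> u 1 + u 3 = v 1 + v 3 ->
  forall c, c 0 + c 2 = c0 0 + c0 2 -> c 1 + c 3 = c0 1 + c0 3 ->
  F.@[fun i => u i + c i] = F.@[fun i => v i + c0 i].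
Proof.
move=> hF u h3 h4 c h1 h2; apply: hF => /=.
  by rewrite addrACA h1 h3 addrACA.
by rewrite addrACA h2 h4 addrACA.
Qed.

Lemma not_irr (lam sig1 sig2 eta1 eta2 : C) :
  ~ irreducible_module (tensor_Omega_act lam eta1 sig1 lam eta2 sig2).
Proof.
move=> [_ hirr].
have hsub : is_submodule (tensor_Omega_act lam eta1 sig1 lam eta2 sig2) Wsum.
  split.
  - by move=> v w _ _; rewrite !meval0.
  - by move=> F G hF hG v w h1 h2; rewrite !mevalD (hF v w) // (hG v w).
  - by move=> a F hF v w h1 h2; rewrite !mevalZ (hF v w).
  move=> x F hF v w h1 h2; case: x => m; rewrite /tensor_Omega_act /=.
  - move: (shift_subst (0 : 'I_4) 1 0 (- m%:~R) F) (eval_ss (0 : 'I_4) 1 0 (- m%:~R) F) => A1 eA1.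
    move: (shift_subst (2 : 'I_4) 3 0 (- m%:~R) F) (eval_ss (2 : 'I_4) 3 0 (- m%:~R) F) => A2 eA2.
    rewrite !mevalD !mevalZ !mevalM !mevalD !mevalZ !mevalXU !mevalC !eA1 !eA2.
    have E := Wsum_E (v := v) (c0 := fun i => if i == 1 then - m%:~R else if i == 0 then 0 else 0) hF.
    rewrite (E w) ?(E v) ?(E w) //= ?oppr0 ?addr0 ?add0r //; try by rewrite h1.
    set A := F.@[_].
    rewrite -!mulrDr -!mulrDl; congr (_ * (_ * _)).
    transitivity ((v 1 + v 3) + m%:~R * (v 0 + v 2) + m%:~R * (eta1 + eta2)); first by ring.
    by rewrite h1 h2; ring.
  - move: (shift_subst (0 : 'I_4) 1 0 (- m%:~R) F) (eval_ss (0 : 'I_4) 1 0 (- m%:~R) F) => A1 eA1.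
    move: (shift_subst (2 : 'I_4) 3 0 (- m%:~R) F) (eval_ss (2 : 'I_4) 3 0 (- m%:~R) F) => A2 eA2.
    rewrite !mevalD !mevalZ !mevalM !mevalXU !eA1 !eA2.
    have E := Wsum_E (v := v) (c0 := fun i => if i == 1 then - m%:~R else if i == 0 then 0 else 0) hF.
    rewrite (E w) ?(E v) ?(E w) //= ?oppr0 ?addr0 ?add0r //; try by rewrite h1.
    set A := F.@[_].
    by rewrite -!mulrDr -!mulrDl h1.
  - by rewrite !mevalD !meval0.
  - move: (shift_subst (0 : 'I_4) 1 1 (- m%:~R) F) (eval_ss (0 : 'I_4) 1 1 (- m%:~R) F) => A1 eA1.
    move: (shift_subst (2 : 'I_4) 3 1 (- m%:~R) F) (eval_ss (2 : 'I_4) 3 1 (- m%:~R) F) => A2 eA2.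
    rewrite !mevalD !mevalZ !eA1 !eA2.
    have E := Wsum_E (v := v) (c0 := fun i => if i == 1 then - m%:~R else if i == 0 then 1 else 0) hF.
    by rewrite (E w) ?(E v) ?(E w) //= ?oppr0 ?addr0 ?add0r //; try by rewrite h1.
have W1 : Wsum 1 by move=> v w _ _; rewrite !meval1.
have := hirr Wsum hsub (ex_intro _ 1 (conj W1 (oner_neq0 _))) 'X_(1 : 'I_4).
move/(_ (fun i => if i == 1 then 1 else 0) (fun i => if i == 3 then 1 else 0)).
rewrite !mevalXU /= => h.
have := h erefl; rewrite addr0 add0r => /(_ erefl) /eqP.
by rewrite oner_eq0.
Qed.

End Main.

Theorem theorem4p6 (R : realType) (lam1 lam2 sig1 sig2 eta1 eta2 : R[i]) :
  lam1 != 0 -> lam2 != 0 -> sig1 != 0 -> sig2 != 0 ->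
  (irreducible_module (tensor_Omega_act lam1 eta1 sig1 lam2 eta2 sig2)
   <-> lam1 != lam2).
Proof.
move=> hl1 hl2 hs1 hs2; split.
  move=> hirr; apply/negP => /eqP e; rewrite -e in hirr.
  exact: (not_irr hirr).
move=> hl12; split; first by exists 1; exact: oner_neq0.
move=> W hW hex F.
have W1 := Wone hl1 hl2 hs1 hs2 hl12 hW hex.
rewrite -[F]mulr1; exact: (Wmul hl1 hl2 hl12 hW W1).
Qed.
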